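(* Let $[0,1,\dots,k]$ be a hierarchical-leadership flock, and let $x_i,v_i:[0,\infty)\to\mathbb{R}^3$ ($0\le i\le k$) satisfy \[\dot x_i=v_i,\qquad \dot v_i=\sum_{j\in\mathcal{L}(i)}a_{ij}(x)(v_j-v_i),\qquad i=1,\dots,k,\] \[\dot x_0=v_0,\qquad \dot v_0=f(t),\qquad t>0,\] with $a_{ij}(x)=H/(1+|x_i-x_j|^2)^{\beta}$ for $j\in\mathcal{L}(i)$, where $H>0$ and $0<\beta<1/2$, and where the leader's free-will acceleration satisfies $|f(t)|=O((1+t)^{-\mu})$ for some exponent $\mu>k$. Then \[\max_{0\le i,j\le k}|v_i(t)-v_j(t)|=O\big((1+t)^{-(\mu-k)}\big).\]
   Context: A flock $[0,1,\dots,k]$ is under hierarchical leadership if $j\in\mathcal{L}(i)$ (agent $i$ is led by agent $j$) only if $j<i$, and every agent $i>0$ has a nonempty leader set $\mathcal{L}(i)$; agent $0$ is the overall leader with no leaders. *)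

(* Defs.v *)
From HB Require Import structures.
From mathcomp Require Import all_boot all_order all_algebra.
From mathcomp Require Import all_classical all_reals all_analysis.
Set Implicit Arguments. Unset Strict Implicit. Unset Printing Implicit Defensive.
Import Order.TTheory GRing.Theory Num.Theory.
Import numFieldNormedType.Exports.
Local Open Scope ring_scope.

(* Euclidean norm on R^3 (the library's norm on row vectors is the max norm). *)
Definition eucl {R : realType} (u : 'rV[R]_3) : R :=
  Num.sqrt (\sum_(c < 3) u ord0 c ^+ 2).

Definition hierarchical (k : nat) (L : 'I_k.+1 -> {set 'I_k.+1}) : Prop :=
  (forall i j : 'I_k.+1, j \in L i -> (j < i)%N) /\
  (forall i : 'I_k.+1, (0 < i)%N -> L i != finset.set0).

Definition cs_weight {R : realType} (H beta : R) (xi xj : 'rV[R]_3) : R :=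
  H / (1 + eucl (xi - xj) ^+ 2) `^ beta.

(* Main.v *)
Require Import Defs.
From HB Require Import structures.
From mathcomp Require Import all_boot all_order all_algebra.
From mathcomp Require Import all_classical all_reals all_analysis.
From mathcomp Require Import ring lra.
Import Order.TTheory GRing.Theory Num.Theory.
Import numFieldNormedType.Exports.
Local Open Scope classical_set_scope.
Local Open Scope ring_scope.
Section Vec.
Context {R : realType}.
Implicit Types u w : 'rV[R]_3.

Definition dot u w : R := \sum_(c < 3) u ord0 c * w ord0 c.

Lemma dot_expand u w : dot u w =
  u ord0 ord0 * w ord0 ord0 + (u ord0 (lift ord0 ord0) * w ord0 (lift ord0 ord0) +
   (u ord0 (lift ord0 (lift ord0 ord0)) * w ord0 (lift ord0 (lift ord0 ord0)))).
Proof. by rewrite /dot !big_ord_recl big_ord0 addr0. Qed.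

Lemma eucl_dot u : eucl u = Num.sqrt (dot u u).
Proof. by rewrite /eucl /dot; under eq_bigr do rewrite expr2. Qed.

Lemma dot_ge0 u : 0 <= dot u u.
Proof. by rewrite /dot; apply: sumr_ge0 => c _; rewrite -expr2 sqr_ge0. Qed.

Lemma eucl_ge0 u : 0 <= eucl u.
Proof. exact: sqrtr_ge0. Qed.

Lemma eucl_sq u : eucl u ^+ 2 = dot u u.
Proof. by rewrite eucl_dot sqr_sqrtr // dot_ge0. Qed.

Lemma dotC u w : dot u w = dot w u.
Proof. by apply: eq_bigr => c _; rewrite mulrC. Qed.

Lemma dotDr u w z : dot u (w + z) = dot u w + dot u z.
Proof. by rewrite /dot -big_split /=; apply: eq_bigr => c _; rewrite mxE mulrDr. Qed.

Lemma dotNr u w : dot u (- w) = - dot u w.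
Proof. by rewrite /dot -sumrN; apply: eq_bigr => c _; rewrite mxE mulrN. Qed.

Lemma dotZr u w (a : R) : dot u (a *: w) = a * dot u w.
Proof. by rewrite /dot mulr_sumr; apply: eq_bigr => c _; rewrite mxE mulrCA. Qed.

Lemma dot_sumr (I : finType) (P : pred I) u (F : I -> 'rV[R]_3) :
  dot u (\sum_(j | P j) F j) = \sum_(j | P j) dot u (F j).
Proof.
rewrite /dot; under eq_bigr do rewrite summxE mulr_sumr.
by rewrite exchange_big.
Qed.

Lemma cs3 (a1 a2 a3 b1 b2 b3 : R) :
  (a1*b1+(a2*b2+a3*b3))^+2 <= (a1*a1+(a2*a2+a3*a3))*(b1*b1+(b2*b2+b3*b3)).
Proof.
have h1 := sqr_ge0 (a1*b2-a2*b1); have h2 := sqr_ge0 (a1*b3-a3*b1);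
have h3 := sqr_ge0 (a2*b3-a3*b2); nra.
Qed.

Lemma CS u w : dot u w <= eucl u * eucl w.
Proof.
have [d0|dpos] := lerP (dot u w) 0.
  by apply: le_trans d0 _; rewrite mulr_ge0 // eucl_ge0.
rewrite !eucl_dot -sqrtrM ?dot_ge0 // -[X in X <= _](gtr0_norm dpos) -sqrtr_sqr.
rewrite ler_sqrt; last by rewrite mulr_ge0 // dot_ge0.
rewrite !dot_expand; exact: cs3.
Qed.

Lemma eucl_triangle u w : eucl (u + w) <= eucl u + eucl w.
Proof.
rewrite [X in X <= _]eucl_dot -[X in _ <= X]ger0_norm ?addr_ge0 ?eucl_ge0 //.
rewrite -sqrtr_sqr ler_sqrt ?sqr_ge0 //.
have -> : dot (u + w) (u + w) = dot u u + 2 * dot u w + dot w w.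
  rewrite dotDr (dotC (u+w) u) (dotC (u+w) w) !dotDr (dotC w u).
  by rewrite mulr2n mulrDl mul1r !addrA.
have := CS u w; rewrite -!eucl_sq; nra.
Qed.

Lemma euclN u : eucl (- u) = eucl u.
Proof. by rewrite !eucl_dot /dot; congr Num.sqrt; apply: eq_bigr => c _; rewrite mxE mulrNN. Qed.

Lemma euclB u w : eucl (u - w) = eucl (w - u).
Proof. by rewrite -euclN opprB. Qed.

Lemma eucl0 : eucl (0 : 'rV[R]_3) = 0.
Proof. by rewrite eucl_dot /dot big1 ?sqrtr0 // => c _; rewrite mxE mul0r. Qed.

Lemma comp_le_eucl u c : `|u ord0 c| <= eucl u.
Proof.
rewrite -sqrtr_sqr /eucl ler_sqrt; last by apply: sumr_ge0 => ? _; exact: sqr_ge0.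
rewrite (bigD1 c) //= lerDl; apply: sumr_ge0 => ? _; exact: sqr_ge0.
Qed.

Lemma eucl_sq_le u B : (forall c, `|u ord0 c| <= B) -> eucl u ^+ 2 <= 3 * B ^+ 2.
Proof.
move=> Hc; rewrite eucl_sq dot_expand.
have h c : u ord0 c * u ord0 c <= B ^+ 2.
  apply: le_trans (ler_norm _) _; rewrite normrM expr2.
  by apply: ler_pM => //; exact: Hc.
have := h ord0; have := h (lift ord0 ord0); have := h (lift ord0 (lift ord0 ord0)).
lra.
Qed.

Lemma comp_derive (c : 'I_3) (F : R -> 'rV[R]_3) (t : R) (D : 'rV[R]_3) : is_derive t 1 F D ->
  is_derive t 1 (fun s => F s ord0 c) (D ord0 c).
Proof.
case=> dF E.
have Hc := (derivable_mxP F t 1).1 dF ord0 c.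
apply: is_derive_eq (derivableP Hc) _.
by rewrite -E (derive_mx dF) mxE.
Qed.

Lemma eucl_derive {F : R -> 'rV[R]_3} {t : R} {D : 'rV[R]_3} : is_derive t 1 F D ->
  0 < eucl (F t) ->
  is_derive t 1 (fun s => eucl (F s)) (dot (F t) D / eucl (F t)).
Proof.
move=> HD pos.
pose q := fun s => \sum_(c < 3) F s ord0 c ^+ 2.
have Hq : is_derive t 1 q (\sum_(c < 3) (2%:R * F t ord0 c ^+ 1) *: D ord0 c).
  have := @is_derive_sum _ _ _ 3 (fun c s => F s ord0 c ^+ 2) t 1
     (fun c => (2%:R * F t ord0 c ^+ 1) *: D ord0 c).
  rewrite fct_sumE; apply => c.
  have := @is_deriveX _ _ (fun s => F s ord0 c) 2 t 1 _ (@comp_derive c _ _ _ HD).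
  by rewrite exprfctE.
have qpos : 0 < q t by rewrite -sqrtr_gt0.
have := is_derive1_comp (is_derive1_sqrt qpos) Hq.
rewrite /comp => H; apply: is_derive_eq H _.
have -> : \sum_(c < 3) (2%:R * F t ord0 c ^+ 1) *: D ord0 c =
    2 * \sum_(c < 3) F t ord0 c * D ord0 c.
  by rewrite mulr_sumr; apply: eq_bigr => c _; rewrite expr1; change ((2 * F t ord0 c) * D ord0 c = 2 * (F t ord0 c * D ord0 c)); by rewrite mulrA.
rewrite -/(dot (F t) D).
have -> : Num.sqrt (q t) = eucl (F t) by [].
have ne : eucl (F t) != 0 by rewrite gt_eqF.
by field.
Qed.
End Vec.
Lemma entry_continuous {R : realType} m n (i : 'I_m) (j : 'I_n) :
  continuous (fun u : 'M[R]_(m, n) => u i j).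
Proof.
move=> u A /nbhs_ballP[e e0 eA]; apply/nbhs_ballP; exists e => // w [_ uw].
exact: eA (uw i j).
Qed.

Lemma eucl_continuous {R : realType} : continuous (@eucl R).
Proof.
have -> : @eucl R = Num.sqrt \o (fun u : 'rV[R]_3 => \sum_(c < 3) u ord0 c ^+ 2).
  by apply/funext => u.
move=> u; apply: continuous_comp; last exact: sqrt_continuous.
have -> : (fun u : 'rV[R]_3 => \sum_(c < 3) u ord0 c ^+ 2) =
    \sum_(c < 3) (fun u : 'rV[R]_3 => u ord0 c ^+ 2) by rewrite fct_sumE.
apply: (big_ind (fun g : 'rV[R]_3 -> R => {for u, continuous g})).
- exact: cst_continuous.
- by move=> g1 g2 c1 c2; apply: continuousD.
- move=> c _.
  have -> : (fun u : 'rV[R]_3 => u ord0 c ^+ 2) = (fun u => u ord0 c) \* (fun u => u ord0 c).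
    by apply/funext => y; rewrite expr2.
  by apply: continuousM; apply: entry_continuous.
Qed.

Lemma within_cont_of_pt {R : realType} (g : R -> R) (a : R) :
  (forall x, a <= x -> {for x, continuous g}) -> {within `[a, +oo[, continuous g}.
Proof.
move=> H; apply/subspace_continuousP => x; rewrite /= in_itv /= andbT => ax.
exact: cvg_within_filter (H x ax).
Qed.

Lemma pw_derive {R : realType} (C p t : R) : -1 < t ->
  is_derive t 1 (fun s => C * (1 + s) `^ p) (C * (p * (1 + t) `^ (p - 1))).
Proof.
move=> t1.
have g : is_derive t 1 (fun s : R => 1 + s) 1.
  have -> : (fun s : R => 1 + s) = (cst (1 : R)) + id by [].
  have := @is_deriveD R R^o R^o (cst (1 : R)) id t 1 0 1 (is_derive_cst _ _ _) (is_derive_id _ _).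
  by rewrite add0r.
have tp : 0 < 1 + t by rewrite -ltrBlDl sub0r.
have := is_derive1_comp (is_derive1_powR p tp) g.
rewrite mulr1 => D.
exact: (@is_deriveZ _ _ _ _ C _ _ _ D).
Qed.

Lemma within_cont_comp {R : realType} (a : R) (W : R -> 'rV[R]_3) :
  {within `[a, +oo[, continuous W} -> {within `[a, +oo[, continuous (fun s => eucl (W s))}.
Proof.
move=> cW x; apply: continuous_comp (cW x) _; exact: eucl_continuous.
Qed.
Lemma barrier {R : realType} (h dh : R -> R) (a : R) :
  {within `[a, +oo[, continuous h} -> h a <= 0 ->
  (forall t, a < t -> 0 < h t -> is_derive t 1 h (dh t) /\ dh t <= 0) ->
  forall t, a <= t -> h t <= 0.
Proof.
move=> hc ha hd s a_s; rewrite leNgt; apply/negP => hs.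
pose S := [set t | a <= t <= s /\ h t <= 0].
have Sa : S a by rewrite /S /= lexx a_s.
have ub : ubound S s by move=> t [/andP[_ ->]].
have hsup : has_sup S by split; [exists a | exists s].
pose m := sup S.
have am : a <= m by apply: sup_upper_bound.
have ms : m <= s by apply: ge_sup => //; exists a.
have hm : h m <= 0.
  rewrite leNgt; apply/negP => hm.
  have cm := (subspace_continuousP _ _).1 hc m.
  have : `[a, +oo[%classic m by rewrite /= in_itv /= am.
  move=> /cm /cvgr_gt /(_ _ hm).
  rewrite near_withinE => /nbhs_ballP [e e0 He].
  have [x Sx mx] := sup_adherent e0 hsup.
  have xm : x <= m by apply: sup_upper_bound.
  move: (Sx) => [/andP[ax _] hx].
  have : 0 < h x.
    apply: He; last by rewrite /= in_itv /= ax.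
    rewrite /ball /= ger0_norm ?subr_ge0 //; by rewrite ltrBlDr addrC -ltrBlDr.
  by rewrite ltNge hx.
have mlts : m < s.
  rewrite lt_neqAle ms andbT; apply/negP => /eqP ems.
  by move: hm; rewrite ems leNgt hs.
have pos : forall t, m < t <= s -> 0 < h t.
  move=> t /andP[mt ts]; rewrite ltNge; apply/negP => ht.
  have : t <= m by apply: sup_upper_bound => //; split => //; rewrite ts andbT (le_trans am) ?ltW.
  by rewrite leNgt mt.
have key : h s <= h m.
  apply: (@ler0_derive1_le_cc _ h m s).
  - move=> x; rewrite in_itv /= => /andP[mx xs].
    have P : 0 < h x by apply: pos; rewrite mx ltW.
    have [D _] := hd x (le_lt_trans am mx) P.
    exact: ex_derive.
  - move=> x; rewrite in_itv /= => /andP[mx xs].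
    have P : 0 < h x by apply: pos; rewrite mx ltW.
    have [D Dl] := hd x (le_lt_trans am mx) P.
    by rewrite derive1E derive_val.
  - apply: continuous_subspaceW hc => x /=; rewrite !in_itv /= => /andP[mx _].
    by rewrite (le_trans am mx).
  - by rewrite in_itv /= lexx ltW.
  - by rewrite in_itv /= lexx ltW.
  - exact: ltW.
by move: hs; rewrite ltNge (le_trans key hm).
Qed.

Lemma barrier_n {R : realType} (W dW : R -> 'rV[R]_3) (g dg : R -> R) (a K0 : R) :
  {within `[a, +oo[, continuous W} ->
  (forall t, a < t -> is_derive t 1 W (dW t)) ->
  (forall t, a < t -> is_derive t 1 g (dg t)) ->
  (forall t, a <= t -> {for t, continuous g}) ->
  (forall t, a <= t -> 0 <= K0 + g t) ->
  eucl (W a) <= K0 + g a ->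
  (forall t, a < t -> K0 + g t < eucl (W t) -> 0 < eucl (W t) ->
     dot (W t) (dW t) / eucl (W t) <= dg t) ->
  forall t, a <= t -> eucl (W t) <= K0 + g t.
Proof.
move=> cW dW' dg' cg gpos Wa key t at_.
rewrite -subr_le0.
apply: (@barrier R (fun s => eucl (W s) - (K0 + g s))
   (fun s => dot (W s) (dW s) / eucl (W s) - dg s) a) => //.
- have c1 := @within_cont_comp _ a W cW.
  have c2 : {within `[a, +oo[, continuous (fun s => K0 + g s)}.
    apply: within_cont_of_pt => y ay.
    by apply: continuousD; [exact: cst_continuous | exact: cg].
  move=> y; move: (c1 y) (c2 y); rewrite /continuous_at => e1 e2.
  exact: cvgB e1 e2.
- by rewrite subr_le0.
- move=> s as_ hs.
  have hs' : K0 + g s < eucl (W s) by rewrite -subr_gt0.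
  have ep : 0 < eucl (W s) by apply: le_lt_trans hs'; apply: gpos; exact: ltW.
  split; last by rewrite subr_le0; apply: key.
  have d1 := eucl_derive (dW' s as_) ep.
  have d2 : is_derive s 1 (fun s => K0 + g s) (dg s).
    have := @is_deriveD R R^o R^o (cst K0) g s 1 0 (dg s) (is_derive_cst _ _ _) (dg' s as_).
    by rewrite add0r.
  exact: (@is_deriveB R R^o R^o _ _ s 1 _ _ d1 d2).
Qed.
Lemma pos_bound {R : realType} (X1 X2 V1 V2 : R -> 'rV[R]_3) (V t : R) :
  {within `[0, +oo[, continuous X1} -> {within `[0, +oo[, continuous X2} ->
  (forall s : R, 0 < s -> is_derive s 1 X1 (V1 s)) ->
  (forall s : R, 0 < s -> is_derive s 1 X2 (V2 s)) ->
  (forall s : R, 0 <= s -> eucl (V1 s - V2 s) <= V) -> 0 <= t ->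
  eucl (X1 t - X2 t) ^+ 2 <= 3 * (eucl (X1 0 - X2 0) + V * t) ^+ 2.
Proof.
move=> c1 c2 d1 d2 bV t0.
apply: eucl_sq_le => c.
pose y := fun s => (X1 s - X2 s) ord0 c.
have cy : {within `[0, t], continuous y}.
  have cX : {within `[0, +oo[, continuous (fun s => X1 s - X2 s)}.
    by move=> z; move: (c1 z) (c2 z) => e1 e2; exact: cvgB e1 e2.
  apply: continuous_subspaceW (_ : `[0, t] `<=` `[0, +oo[) _.
    by move=> z /=; rewrite !in_itv /= => /andP[-> _].
  move=> z; exact: (continuous_comp (cX z) (@entry_continuous R 1 3 ord0 c (X1 z - X2 z))).
have dy : forall s, s \in `]0, t[ -> is_derive s 1 y ((V1 s - V2 s) ord0 c).
  move=> s; rewrite in_itv /= => /andP[s0 _].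
  apply: (@comp_derive R c (fun s => X1 s - X2 s) s (V1 s - V2 s)).
  exact: (@is_deriveB R R^o _ _ _ s 1 _ _ (d1 s s0) (d2 s s0)).
have [z] := MVT_segment t0 dy cy.
rewrite in_itv /= => /andP[z0 zt] E.
have : `|y t| <= `|y 0| + `|y t - y 0|.
  have e : y t = y 0 + (y t - y 0) by rewrite addrC subrK.
  by rewrite {1}e; apply: ler_normD.
rewrite E normrM subr0 (ger0_norm t0) => H.
apply: le_trans H _; apply: lerD; first exact: comp_le_eucl.
apply: ler_pM => //.
exact: le_trans (comp_le_eucl _ _) (bV z z0).
Qed.

Lemma weight_lb {R : realType} (H beta P t : R) (a b : 'rV[R]_3) :
  0 < H -> 0 < beta -> 0 <= P -> 0 <= t ->
  eucl (a - b) ^+ 2 <= P * (1 + t) ^+ 2 ->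
  H / (1 + P) `^ beta * (1 + t) `^ (- (2 * beta)) <= cs_weight H beta a b.
Proof.
move=> H0 b0 P0 t0 hP.
have t1 : 1 <= (1 + t) ^+ 2 by rewrite expr2; nra.
have le1 : 1 + eucl (a - b) ^+ 2 <= (1 + P) * (1 + t) ^+ 2.
  by rewrite mulrDl mul1r lerD.
have pe : 0 < 1 + eucl (a - b) ^+ 2 by rewrite ltr_pwDl // sqr_ge0.
have m := ge0_ler_powR (ltW b0) (ltW pe) _ le1.
have e : (1 + t) `^ (2 * beta) = ((1 + t) ^+ 2) `^ beta.
  by rewrite powRrM powR_mulrn // addr_ge0.
rewrite powRM ?addr_ge0 // ?sqr_ge0 // -e in m.
rewrite /cs_weight (powRN (1 + t)) -mulrA -invfM.
apply: ler_wpM2l; first exact: ltW.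
rewrite lef_pV2.
- apply: m; rewrite nnegrE; apply: mulr_ge0; first by rewrite addr_ge0.
  exact: sqr_ge0.
- by rewrite posrE mulr_gt0 // powR_gt0 // ltr_pwDl.
- by rewrite posrE powR_gt0.
Qed.

Lemma deriv_cont {R : realType} (g : R -> R) (t d : R) :
  is_derive t 1 g d -> {for t, continuous g}.
Proof. by case=> D _; apply: differentiable_continuous; apply/derivable1_diffP. Qed.

Lemma dot_bound {R : realType} k (L : {set 'I_k.+1}) (a : 'I_k.+1 -> R)
    (V : 'I_k.+1 -> 'rV[R]_3) (i : 'I_k.+1) (F : 'rV[R]_3) :
  (forall j, 0 <= a j) -> 0 < eucl (V i - V ord0) ->
  dot (V i - V ord0) (\sum_(j in L) a j *: (V j - V i) - F) / eucl (V i - V ord0)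
  <= \sum_(j in L) a j * (eucl (V j - V ord0) - eucl (V i - V ord0)) + eucl F.
Proof.
move=> a0 np; set w := V i - V ord0; set n := eucl w.
rewrite ler_pdivrMr // mulrDl mulr_suml.
rewrite dotDr dotNr dot_sumr; apply: lerD.
  apply: ler_sum => j _; rewrite dotZr -mulrA; apply: ler_wpM2l => //.
  have -> : V j - V i = (V j - V ord0) - w by rewrite /w opprB addrA subrK.
  rewrite dotDr dotNr -eucl_sq -/n.
  have := CS w (V j - V ord0); rewrite -/n => h.
  by rewrite mulrBl expr2 lerB // mulrC.
by rewrite -dotNr (le_trans (CS _ _)) // euclN mulrC.
Qed.
Lemma agent_step {R : realType} (k : nat) (L : 'I_k.+1 -> {set 'I_k.+1})
    (H beta mu Cf Cc : R) (x v : 'I_k.+1 -> R -> 'rV[R]_3) (f : R -> 'rV[R]_3)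
    (i : 'I_k.+1) :
  hierarchical L ->
  0 < H -> 0 < beta -> beta < 1 / 2 ->
  (k%:R < mu) -> (0 < k)%N -> 0 <= Cf -> 0 <= Cc ->
  (forall t : R, 0 < t -> eucl (f t) <= Cf * (1 + t) `^ (- mu)) ->
  (forall i : 'I_k.+1, {within `[0, +oo[, continuous (x i)}) ->
  (forall i : 'I_k.+1, {within `[0, +oo[, continuous (v i)}) ->
  (forall (i : 'I_k.+1) (t : R), 0 < t -> is_derive t 1 (x i) (v i t)) ->
  (forall t : R, 0 < t -> is_derive t 1 (v ord0) (f t)) ->
  (forall (i : 'I_k.+1) (t : R), (0 < i)%N -> 0 < t ->
     is_derive t 1 (v i)
       (\sum_(j in L i) cs_weight H beta (x i t) (x j t) *: (v j t - v i t))) ->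
  (0 < i)%N ->
  (forall j : 'I_k.+1, (j < i)%N -> forall t : R, 0 <= t ->
     eucl (v j t - v ord0 t) <= Cc * (1 + t) `^ (- (mu - k%:R))) ->
  exists C : R, forall t : R, 0 <= t ->
     eucl (v i t - v ord0 t) <= C * (1 + t) `^ (- (mu - k%:R)).
Proof.
move=> [hL1 hL2] H0 b0 b12 kmu k0 Cf0 Cc0 hf cx cv dx dv0 dv i0 IH.
set gam := mu - k%:R.
have gam0 : 0 < gam by rewrite subr_gt0.
have k1 : 1 <= k%:R :> R by rewrite ler1n.
have mu1 : 1 < mu by apply: le_lt_trans kmu.
have rho_le1 : forall t : R, 0 <= t -> (1 + t) `^ (- gam) <= 1.
  move=> t t0; rewrite -[X in _ <= X](powRr0 (1 + t)); apply: ler_powR; first by rewrite lerDl.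
  by rewrite oppr_le0 ltW.
pose W := fun s => v i s - v ord0 s.
have cW : {within `[0, +oo[, continuous W}.
  by move=> z; move: (cv i z) (cv ord0 z) => e1 e2; exact: cvgB e1 e2.
pose a := fun s (j : 'I_k.+1) => cs_weight H beta (x i s) (x j s).
have a0 : forall s j, 0 <= a s j.
  by move=> s j; rewrite /a /cs_weight divr_ge0 ?powR_ge0 // ltW.
pose DW := fun s => \sum_(j in L i) a s j *: (v j s - v i s) - f s.
have dW : forall s : R, 0 < s -> is_derive s 1 W (DW s).
  move=> s s0; exact: (@is_deriveB R R^o _ _ _ s 1 _ _ (dv i s i0 s0) (dv0 s s0)).
have nd : forall s : R, 0 < eucl (W s) ->
    dot (W s) (DW s) / eucl (W s) <=
    \sum_(j in L i) a s j * (eucl (v j s - v ord0 s) - eucl (W s)) + eucl (f s).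
  by move=> s Hs; exact: (@dot_bound R k (L i) (a s) (fun j => v j s) i (f s) (a0 s) Hs).
pose Dc := Cf / (mu - 1).
have Dc0 : 0 <= Dc by rewrite divr_ge0 // subr_ge0 ltW.
pose K0 := Cc + eucl (W 0) + Dc.
pose g := fun s : R => (- Dc) * (1 + s) `^ (1 - mu).
have gge : forall t : R, 0 <= t -> Cc + eucl (W 0) <= K0 + g t.
  move=> t t0; rewrite /K0 /g.
  have P1 : (1 + t) `^ (1 - mu) <= 1.
    rewrite -[X in _ <= X](powRr0 (1 + t)); apply: ler_powR; first by rewrite lerDl.
    by rewrite subr_le0 ltW.
  have : Dc * (1 + t) `^ (1 - mu) <= Dc by rewrite ler_piMr // powR_ge0.
  lra.
have bnd : forall t : R, 0 <= t -> eucl (W t) <= K0 + g t.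
  apply: (@barrier_n R W DW g (fun s => (- Dc) * ((1 - mu) * (1 + s) `^ (1 - mu - 1))) 0 K0 cW dW).
  - by move=> t t0; apply: pw_derive; lra.
  - by move=> t t0; apply: deriv_cont (pw_derive _ _ _ _); lra.
  - by move=> t t0; apply: le_trans (gge t t0); rewrite addr_ge0 // eucl_ge0.
  - have := gge 0 (lexx 0); rewrite /g addr0 powR1 /=.
    have := eucl_ge0 (W 0); lra.
  - move=> t t0 lt np; apply: le_trans (nd t np) _.
    have -> : 1 - mu - 1 = - mu by ring.
    have -> : - Dc * ((1 - mu) * (1 + t) `^ (- mu)) = Cf * (1 + t) `^ (- mu).
      rewrite /Dc; field; rewrite subr_eq0 gt_eqF //.
    rewrite -[X in _ <= X]add0r; apply: lerD; last exact: hf.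
    apply: sumr_le0 => j jL; apply: mulr_ge0_le0 => //.
    rewrite subr_le0; apply: (le_trans (IH j (hL1 i j jL) t (ltW t0))).
    apply: le_trans (ltW lt); apply: le_trans (gge t (ltW t0)).
    have := rho_le1 t (ltW t0); have := eucl_ge0 (W 0).
    have : Cc * (1 + t) `^ (- gam) <= Cc by apply: ler_piMr => //; apply: rho_le1; exact: ltW.
    lra.
have gle0 : forall t : R, g t <= 0.
  by move=> t; rewrite /g mulr_le0_ge0 ?powR_ge0 // oppr_le0.
have K00 : 0 <= K0 by rewrite /K0 !addr_ge0 // eucl_ge0.
have bndK : forall t : R, 0 <= t -> eucl (W t) <= K0.
  by move=> t t0; apply: le_trans (bnd t t0) _; rewrite gerDl.
case/set0Pn: (hL2 i i0) => j0 j0L.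
have j0i := hL1 i j0 j0L.
pose V := K0 + Cc.
have V0 : 0 <= V by rewrite addr_ge0.
have vb : forall s : R, 0 <= s -> eucl (v i s - v j0 s) <= V.
  move=> s s0.
  have -> : v i s - v j0 s = W s + (- (v j0 s - v ord0 s)).
    by rewrite /W opprB addrA subrK.
  apply: le_trans (eucl_triangle _ _) _; rewrite euclN; apply: lerD; first exact: bndK.
  apply: le_trans (IH j0 j0i s s0) _; apply: ler_piMr => //; exact: rho_le1.
pose Y0 := eucl (x i 0 - x j0 0).
have Y00 : 0 <= Y0 by exact: eucl_ge0.
pose P := 3 * (Y0 + V) ^+ 2.
have P0 : 0 <= P by rewrite mulr_ge0 // sqr_ge0.
have Pb : forall t : R, 0 <= t -> eucl (x i t - x j0 t) ^+ 2 <= P * (1 + t) ^+ 2.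
  move=> t t0; apply: le_trans (@pos_bound R (x i) (x j0) (v i) (v j0) V t (cx i) (cx j0) (dx i) (dx j0) vb t0) _.
  have h1 : 0 <= Y0 + V * t by rewrite addr_ge0 // mulr_ge0.
  have h2 : Y0 + V * t <= (Y0 + V) * (1 + t) by nra.
  rewrite /P -mulrA -exprMn; apply: ler_wpM2l => //.
  rewrite -/Y0 !expr2; apply: ler_pM => //.
pose c := H / (1 + P) `^ beta.
have c0 : 0 < c by rewrite /c divr_gt0 // powR_gt0 // ltr_pwDl.
have alb : forall t : R, 0 <= t -> c * (1 + t) `^ (- (2 * beta)) <= a t j0.
  by move=> t t0; apply: weight_lb => //; exact: Pb.
pose Q := 2 * (gam + Cf) / c.
have cQ : c * Q = 2 * (gam + Cf) by rewrite /Q mulrC divfK // gt_eqF.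
pose e := 1 - 2 * beta.
have e0 : 0 < e by rewrite /e; lra.
pose T0 := (Num.max Q 1) `^ (e^-1).
have T00 : 0 <= T0 by exact: powR_ge0.
have rT : forall t : R, T0 <= t -> Q <= (1 + t) `^ e.
  move=> t tT.
  have M0 : 0 <= Num.max Q 1 by rewrite le_max ler01 orbT.
  have : T0 `^ e <= (1 + t) `^ e.
    apply: (ge0_ler_powR (ltW e0)); rewrite ?nnegrE //; first by lra.
    lra.
  rewrite /T0 -powRrM mulVf ?gt_eqF // powRr1 //.
  by apply: le_trans; rewrite le_max lexx.
pose C := Num.max (2 * Cc + 1) (K0 * (1 + T0) `^ gam).
have C1 : 2 * Cc + 1 <= C by rewrite le_max lexx.
have C2 : K0 * (1 + T0) `^ gam <= C by rewrite le_max lexx orbT.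
have early : forall t : R, 0 <= t -> t <= T0 -> eucl (W t) <= C * (1 + t) `^ (- gam).
  move=> t t0 tT; apply: le_trans (bndK t t0) _.
  apply: le_trans (_ : K0 * (1 + T0) `^ gam * (1 + t) `^ (- gam) <= _); last first.
    by apply: ler_wpM2r => //; exact: powR_ge0.
  have A0 : 0 < (1 + t) `^ gam by apply: powR_gt0; lra.
  rewrite powRN ler_pdivlMr // ler_wpM2l //.
  apply: (ge0_ler_powR (ltW gam0)); rewrite ?nnegrE; lra.
have C0 : 0 <= C by apply: le_trans C1; lra.
have Cge1 : 1 <= C by apply: le_trans C1; lra.
have late : forall t : R, T0 <= t -> eucl (W t) <= 0 + C * (1 + t) `^ (- gam).
  apply: (@barrier_n R W DW (fun s => C * (1 + s) `^ (- gam))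
     (fun s => C * (- gam * (1 + s) `^ (- gam - 1))) T0 0).
  - apply: continuous_subspaceW cW => z /=; rewrite !in_itv /= !andbT => Tz.
    exact: le_trans Tz.
  - by move=> t tT; apply: dW; apply: le_lt_trans tT.
  - by move=> t tT; apply: pw_derive; lra.
  - by move=> t tT; apply: deriv_cont (pw_derive _ _ _ _); lra.
  - by move=> t tT; rewrite add0r mulr_ge0 // powR_ge0.
  - by rewrite add0r; apply: early.
  move=> t tT lt np; apply: le_trans (nd t np) _.
  have t0 : 0 <= t by lra.
  have s1 : 1 <= 1 + t by lra.
  have s0 : 0 < 1 + t by lra.
  have rho0 : 0 < (1 + t) `^ (- gam) by apply: powR_gt0.
  have p0 : 0 < (1 + t)^-1 by rewrite invr_gt0.
  have Erp : (1 + t) `^ (- gam - 1) = (1 + t) `^ (- gam) * (1 + t)^-1.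
    rewrite powRD; last by apply/implyP => _; rewrite gt_eqF.
    by rewrite powR_inv1 // ltW.
  have Eu : (1 + t) `^ (- (2 * beta)) = (1 + t) `^ e * (1 + t)^-1.
    have -> : - (2 * beta) = e + (-1) by rewrite /e; ring.
    rewrite powRD; last by apply/implyP => _; rewrite gt_eqF.
    by rewrite powR_inv1 // ltW.
  have Emu : (1 + t) `^ (- mu) <= (1 + t) `^ (- gam) * (1 + t)^-1.
    rewrite -Erp; apply: ler_powR => //; rewrite /gam; lra.
  have hf' : eucl (f t) <= Cf * ((1 + t) `^ (- gam) * (1 + t)^-1).
    have tp : 0 < t by lra.
    apply: le_trans (hf t tp) _.
    exact: ler_wpM2l.
  have rQ := rT t (ltW tT).
  have lt' : C * (1 + t) `^ (- gam) < eucl (W t) by rewrite -[X in X < _]add0r.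
  have Sneg : \sum_(j in L i | j != j0) a t j * (eucl (v j t - v ord0 t) - eucl (W t)) <= 0.
    apply: sumr_le0 => j /andP[jL _]; apply: mulr_ge0_le0 => //.
    rewrite subr_le0; apply: le_trans (IH j (hL1 i j jL) t t0) _.
    apply: ltW; apply: le_lt_trans lt'; apply: ler_wpM2r; first exact: ltW.
    lra.
  have T1 : a t j0 * (eucl (v j0 t - v ord0 t) - eucl (W t)) <=
      a t j0 * (Cc * (1 + t) `^ (- gam) - C * (1 + t) `^ (- gam)).
    apply: ler_wpM2l => //; apply: lerB; first exact: IH.
    exact: ltW.
  have T2 : a t j0 * (Cc * (1 + t) `^ (- gam) - C * (1 + t) `^ (- gam)) <=
      c * (1 + t) `^ (- (2 * beta)) * (Cc * (1 + t) `^ (- gam) - C * (1 + t) `^ (- gam)).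
    apply: ler_wnM2r; last exact: alb.
    rewrite subr_le0; apply: ler_wpM2r; first exact: ltW.
    lra.
  rewrite (bigD1 j0) //=.
  rewrite Eu in T2.
  have X1 : gam * C + Cf <= c * (1 + t) `^ e * (C - Cc).
    have : c * Q * (C - Cc) <= c * (1 + t) `^ e * (C - Cc).
      apply: ler_wpM2r; first lra.
      by apply: ler_wpM2l => //; exact: ltW.
    rewrite cQ; nra.
  have X2 : 0 <= (1 + t) `^ (- gam) * (1 + t)^-1 *
        (c * (1 + t) `^ e * (C - Cc) - (gam * C + Cf)).
    by apply: mulr_ge0; [apply: mulr_ge0; exact: ltW | lra].
  set rho := (1 + t) `^ (- gam) in T1 T2 Sneg hf' X2 lt' *.
  set r := (1 + t) `^ e in T2 X1 X2 *.
  set p := (1 + t)^-1 in T2 hf' X2 *.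
  rewrite Erp -/rho -/p.
  nra.
exists C => t t0; case: (lerP t T0) => tT; first exact: early.
by have := late t (ltW tT); rewrite add0r.
Qed.

Theorem theorem6 (R : realType) (k : nat) (L : 'I_k.+1 -> {set 'I_k.+1})
    (H beta mu : R) (x v : 'I_k.+1 -> R -> 'rV[R]_3) (f : R -> 'rV[R]_3) :
  hierarchical L ->
  0 < H -> 0 < beta -> beta < 1 / 2 ->
  (k%:R < mu) ->
  (exists Cf : R, forall t : R, 0 < t -> eucl (f t) <= Cf * (1 + t) `^ (- mu)) ->
  (forall i : 'I_k.+1, {within `[0, +oo[, continuous (x i)}) ->
  (forall i : 'I_k.+1, {within `[0, +oo[, continuous (v i)}) ->
  (forall (i : 'I_k.+1) (t : R), 0 < t -> is_derive t 1 (x i) (v i t)) ->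
  (forall t : R, 0 < t -> is_derive t 1 (v ord0) (f t)) ->
  (forall (i : 'I_k.+1) (t : R), (0 < i)%N -> 0 < t ->
     is_derive t 1 (v i)
       (\sum_(j in L i) cs_weight H beta (x i t) (x j t) *: (v j t - v i t))) ->
  exists C : R, forall t : R, 0 <= t -> forall i j : 'I_k.+1,
    eucl (v i t - v j t) <= C * (1 + t) `^ (- (mu - k%:R)).
Proof.
move=> hL H0 b0 b12 kmu [Cf hf] cx cv dx dv0 dv.
case: (posnP k) => [k0 | k0].
  exists 0 => t t0 i j.
  have -> : i = j.
    apply/val_inj; have hi := ltn_ord i; have hj := ltn_ord j.
    rewrite [in X in (_ < X)%N]k0 ltnS leqn0 in hi.
    rewrite [in X in (_ < X)%N]k0 ltnS leqn0 in hj.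
    exact: (etrans (eqP hi) (esym (eqP hj))).
  by rewrite subrr eucl0 mul0r.
pose Cf' := Num.max Cf 0.
have Cf0 : 0 <= Cf' by rewrite le_max lexx orbT.
have hf' : forall t : R, 0 < t -> eucl (f t) <= Cf' * (1 + t) `^ (- mu).
  move=> t t0; apply: le_trans (hf t t0) _; apply: ler_wpM2r; first exact: powR_ge0.
  by rewrite le_max lexx.
set rho := fun t : R => (1 + t) `^ (- (mu - k%:R)).
have claim : forall n : nat, exists2 C : R, 0 <= C &
    forall j : 'I_k.+1, (j < n)%N -> forall t : R, 0 <= t ->
      eucl (v j t - v ord0 t) <= C * (1 + t) `^ (- (mu - k%:R)).
  elim=> [|n [C C0 IHn]]; first by exists 0 => // j.
  case: (ltnP n k.+1) => nk; last first.
    exists C => // j jn; apply: IHn; exact: leq_trans (ltn_ord j) nk.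
  case: (posnP n) => n0.
    exists C => // j; rewrite n0 ltnS leqn0 => /eqP j0 t t0.
    have -> : j = ord0 by apply/val_inj.
    by rewrite subrr eucl0 mulr_ge0 // powR_ge0.
  have [C' HC'] := @agent_step R k L H beta mu Cf' C x v f (Ordinal nk) hL H0 b0 b12
      kmu k0 Cf0 C0 hf' cx cv dx dv0 dv n0 IHn.
  exists (Num.max C C'); first by rewrite le_max C0.
  move=> j; rewrite ltnS leq_eqVlt => /orP[/eqP jn | jn] t t0.
    have -> : j = Ordinal nk by apply/val_inj.
    apply: le_trans (HC' t t0) _; apply: ler_wpM2r; first exact: powR_ge0.
    by rewrite le_max lexx orbT.
  apply: le_trans (IHn j jn t t0) _; apply: ler_wpM2r; first exact: powR_ge0.
  by rewrite le_max lexx.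
have [C C0 HC] := claim k.+1.
exists (C + C) => t t0 i j.
have -> : v i t - v j t = (v i t - v ord0 t) + (- (v j t - v ord0 t)).
  by rewrite opprB addrA subrK.
apply: le_trans (eucl_triangle _ _) _; rewrite euclN mulrDl.
by apply: lerD; apply: HC.
Qed.
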